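(* Let $k\ge2$, $n\ge1$ be integers, let $\Xi:=\{\mathbf{z}\in\mathbb{R}^n_+:\mathbf{e}^T\mathbf{z}\ge1\}$ and define $\varphi(\mathbf{z}):=(\mathbf{e}^T\mathbf{z})^{-\frac{k-2}{k-1}}\mathbf{z}$ for $\mathbf{z}\in\Xi$. Then for all $\mathbf{a},\mathbf{b}\in\Xi$, $$\|\varphi(\mathbf{a})-\varphi(\mathbf{b})\|_1\le\frac{2k-3}{k-1}\|\mathbf{a}-\mathbf{b}\|_1.$$
   Context: $\mathbf{e}$ is the all-ones vector in $\mathbb{R}^n$. *)

(* Defs.v *)
From HB Require Import structures.
From mathcomp Require Import all_boot all_order all_algebra.
From mathcomp Require Import all_classical all_reals.
From mathcomp Require Import exp.
Set Implicit Arguments. Unset Strict Implicit. Unset Printing Implicit Defensive.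
Import Order.TTheory GRing.Theory Num.Theory.
Local Open Scope ring_scope.

Definition esum (R : realType) (n : nat) (z : 'I_n -> R) : R := \sum_(i < n) z i.

Definition norm1 (R : realType) (n : nat) (z : 'I_n -> R) : R := \sum_(i < n) `|z i|.

Definition inXi (R : realType) (n : nat) (z : 'I_n -> R) : Prop :=
  (forall i, 0 <= z i) /\ 1 <= esum z.

Definition phi (R : realType) (k n : nat) (z : 'I_n -> R) : 'I_n -> R :=
  fun i => powR (esum z) (- ((k%:R - 2) / (k%:R - 1))) * z i.

(* Main.v *)
Require Import Defs.
From HB Require Import structures.
From mathcomp Require Import all_boot all_order all_algebra.
From mathcomp Require Import all_classical all_reals.
From mathcomp Require Import exp.
From mathcomp Require Import ring lra.
Import Order.TTheory GRing.Theory Num.Theory.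
Local Open Scope ring_scope.

Section Aux.
Variable R : realType.

Lemma amgm (p s t : R) : 0 <= p < 1 -> 1 <= t -> t <= s ->
  powR s p * powR t (1 - p) <= p * s + (1 - p) * t.
Proof.
move=> /andP[p0 p1] t1 ts.
have t0 : 0 <= t by lra.
have s0 : 0 <= s by lra.
have [->|pp] := eqVneq p 0.
  rewrite powRr0 subr0 powRr1 //; lra.
have p0' : 0 < p by rewrite lt_neqAle eq_sym pp.
have q0 : 0 < 1 - p by lra.
have := @conjugate_powR R (powR s p) (powR t (1 - p)) p^-1 (1 - p)^-1
  (powR_ge0 _ _) (powR_ge0 _ _) _ _ _.
rewrite -!powRrM !divff ?gt_eqF // !powRr1 // !invrK.
move=> H; apply: (le_trans (H _ _ _)); rewrite ?invr_gt0 //; lra.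
Qed.

Lemma key (k n : nat) (hk : (2 <= k)%N) (a b : 'I_n -> R) (ha : inXi a) (hb : inXi b)
  (hst : esum b <= esum a) :
  norm1 (fun i => phi k a i - phi k b i)
    <= (2 * k%:R - 3) / (k%:R - 1) * norm1 (fun i => a i - b i).
Proof.
case: ha => a0 s1; case: hb => b0 t1.
set s := esum a in s1 hst *; set t := esum b in t1 hst *.
set p := (k%:R - 2) / (k%:R - 1) : R.
have k2 : 2 <= k%:R :> R by rewrite (ler_nat R 2 k).
have k1 : 0 < k%:R - 1 :> R by lra.
have p0 : 0 <= p by rewrite /p divr_ge0 //; lra.
have p1 : p < 1 by rewrite /p ltr_pdivrMr //; lra.
have ep : (2 * k%:R - 3) / (k%:R - 1) = 1 + p.
  by rewrite /p; field; rewrite gt_eqF.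
rewrite ep.
set A := powR s (- p); set B := powR t (- p).
set u := powR s p; set v := powR t p; set w := powR t (1 - p).
have v1 : 1 <= v by rewrite /v -(powRr0 t) ler_powR.
have uv : v <= u by rewrite /u /v ge0_ler_powR //; rewrite ?nnegrE; lra.
have Au : A * u = 1 by rewrite /A powRN mulVf // gt_eqF // powR_gt0 //; lra.
have Bv : B * v = 1 by rewrite /B powRN mulVf // gt_eqF // powR_gt0 //; lra.
have wv : w * v = t.
  rewrite /w /v -powRD; first by rewrite subrK powRr1 //; lra.
  by apply/implyP => _; rewrite gt_eqF //; lra.
have am := @amgm p s t (introT andP (conj p0 p1)) t1 hst.
rewrite -/u -/w in am.
have A0 : 0 <= A by apply: powR_ge0.
have w0 : 0 <= w by apply: powR_ge0.
have A1 : A <= 1 by nra.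
have AB : A <= B by nra.
have D : t * (B - A) <= p * (s - t).
  have h1 : 0 <= A * (p * (s - t) - w * (u - v)) by apply: mulr_ge0; nra.
  have h2 : 0 <= (1 - A) * (p * (s - t)) by apply: mulr_ge0; nra.
  have -> : t * (B - A) = w - w * v * A by rewrite -wv; rewrite mulrBr -(mulrA w v B) (mulrC v B) Bv mulr1.
  nra.
have N : s - t <= norm1 (fun i => a i - b i).
  rewrite /s /t /esum /norm1 -sumrB; apply: ler_sum => i _; apply: ler_norm.
have step : norm1 (fun i => phi k a i - phi k b i)
    <= A * norm1 (fun i => a i - b i) + (B - A) * t.
  rewrite /norm1 /t /esum !mulr_sumr -big_split /=; apply: ler_sum => i _.
  rewrite /phi -/s -/t -/A -/B.
  have -> : A * a i - B * b i = A * (a i - b i) - (B - A) * b i by ring.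
  apply: (le_trans (ler_normB _ _)).
  rewrite normrM (ger0_norm A0) normrM (ger0_norm (b0 i)) (@ger0_norm _ (B - A)); last lra.
  by [].
apply: (le_trans step).
have Nn : 0 <= norm1 (fun i => a i - b i) by apply: sumr_ge0 => i _.
nra.
Qed.
End Aux.

Theorem lemma3p9 (R : realType) (k n : nat) (hk : (2 <= k)%N) (hn : (1 <= n)%N)
  (a b : 'I_n -> R) (ha : inXi a) (hb : inXi b) :
  norm1 (fun i => phi k a i - phi k b i)
    <= (2 * k%:R - 3) / (k%:R - 1) * norm1 (fun i => a i - b i).
Proof.
have [h|h] := lerP (esum b) (esum a); first exact: key.
have h' : esum a <= esum b by apply: ltW.
have := @key R k n hk b a hb ha h'.
have E : forall f g : 'I_n -> R, norm1 (fun i => f i - g i) = norm1 (fun i => g i - f i).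
  by move=> f g; apply: eq_bigr => i _; rewrite distrC.
by rewrite (E (phi k b) (phi k a)) (E b a).
Qed.
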